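(* Let $X$ (features, taking values in $\mathcal{X}$) and $S$ (sensitive attribute, taking values in $\mathcal{S}\subset\{0,1\}^{d_s}$) be jointly distributed random variables. For an encoder $f:\mathcal{X}\to\mathcal{Z}$, let $Z=f(X)$ be the representation, and measure distortion by $d(X,\{Z,S\})=E[-\log p(x\mid z,s)]=H(X\mid Z,S)$. Define the unfairness-distortion function $$I(D)=\min_{f} I(Z,S)\ \text{ s.t. }\ H(X\mid Z,S)\le D,$$ and the rate-distortion function $$R(D)=\min_{f} I(X,Z)\ \text{ s.t. }\ H(X\mid Z,S)\le D.$$ Then $I(D)=R(D)+D-C$ if $\frac{\partial R}{\partial D}(D)\le -1$, and $I(D)=0$ otherwise, where $C=H(X\mid S)$ is a constant depending only on the data and not on $D$. Moreover, $I(D)$ is a non-increasing convex function of $D$.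
   Context: $I(\cdot,\cdot)$ denotes mutual information and $H(\cdot\mid\cdot)$ conditional entropy. The representation $Z$ is produced by the encoder from $X$ alone (so $Z$ is conditionally independent of $S$ given $X$); the minima are over encoders $f$. $R(D)$ is assumed differentiable where its derivative $\partial R/\partial D$ is used. *)

(* Defs.v *)
From HB Require Import structures.
From mathcomp Require Import all_boot all_order all_algebra.
From mathcomp Require Import all_classical all_reals all_analysis.
Set Implicit Arguments. Unset Strict Implicit. Unset Printing Implicit Defensive.
Import Order.TTheory GRing.Theory Num.Theory.
Local Open Scope ring_scope.
Local Open Scope classical_set_scope.

Section InfoDefs.
Variables (R : realType) (X S : finType).

(* Shannon entropy (in nats) of a nonnegative weight function on a finite type;
   convention 0 ln 0 = 0 holds since 0 * ln 0 = 0. *)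
Definition ent (T : finType) (P : T -> R) : R := - \sum_(t : T) P t * ln (P t).

(* a stochastic encoder X -> 'I_n : rows are probability vectors *)
Definition is_channel (n : nat) (q : X -> 'I_n -> R) : Prop :=
  (forall x z, 0 <= q x z) /\ (forall x, \sum_(z < n) q x z = 1).

Variable p : X -> S -> R.

Definition pXSZ n (q : X -> 'I_n -> R) (t : X * S * 'I_n) : R :=
  p t.1.1 t.1.2 * q t.1.1 t.2.
Definition pSZ n (q : X -> 'I_n -> R) (t : S * 'I_n) : R :=
  \sum_(x : X) p x t.1 * q x t.2.
Definition pXZ n (q : X -> 'I_n -> R) (t : X * 'I_n) : R :=
  \sum_(s : S) p t.1 s * q t.1 t.2.
Definition pZ n (q : X -> 'I_n -> R) (z : 'I_n) : R :=
  \sum_(x : X) \sum_(s : S) p x s * q x z.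
Definition pS (s : S) : R := \sum_(x : X) p x s.
Definition pX (x : X) : R := \sum_(s : S) p x s.
Definition pXS (t : X * S) : R := p t.1 t.2.

Definition condent_X_ZS n (q : X -> 'I_n -> R) : R :=
  ent (pXSZ q) - ent (pSZ q).
Definition MI_ZS n (q : X -> 'I_n -> R) : R :=
  ent (pZ q) + ent pS - ent (pSZ q).
Definition MI_XZ n (q : X -> 'I_n -> R) : R :=
  ent pX + ent (pZ q) - ent (pXZ q).

Definition Ccst : R := ent pXS - ent pS.

Definition feas_vals (obj : forall n, (X -> 'I_n -> R) -> R) (D : R) : set R :=
  [set v | exists n (q : X -> 'I_n -> R),
     is_channel q /\ condent_X_ZS q <= D /\ v = obj n q].

Definition IDfun (D : R) : R := inf (feas_vals MI_ZS D).
Definition RDfun (D : R) : R := inf (feas_vals MI_XZ D).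

End InfoDefs.

(* Main.v *)
Require Import Defs.
From HB Require Import structures.
From mathcomp Require Import all_boot all_order all_algebra.
From mathcomp Require Import all_classical all_reals all_analysis.
From mathcomp Require Import ring lra.
Import Order.TTheory GRing.Theory Num.Theory.
Import numFieldNormedType.Exports.
Set Implicit Arguments. Unset Strict Implicit. Unset Printing Implicit Defensive.
Local Open Scope ring_scope.

Lemma nincr_derive1_le0 (R : realType) (f : R -> R) (a b x : R) : a < x -> x < b ->
  derivable f x 1 -> (forall u v, a < u -> u <= v -> v < b -> f v <= f u) -> derive1 f x <= 0.
Proof.
move=> ax xb df nf.
rewrite derive1E.
apply: limr_le.
  exact: df.
have e0 : 0 < Num.min (x - a) (b - x) by rewrite lt_min !subr_gt0 ax xb.
near=> h.
have h0 : h != 0 by near: h; exact: nbhs_dnbhs_neq.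
have hl : `|h| < Num.min (x - a) (b - x) by near: h; exact: dnbhs0_lt.
move: hl; rewrite lt_min => /andP[h1 h2].
change (h^-1 * (f (h * 1 + x) - f x) <= 0); rewrite mulr1.
move: h0; rewrite neq_lt => /orP[hn|hp].
- rewrite nmulr_rle0 ?invr_lt0 // subr_ge0; apply: nf; last by [].
  + by move: h1; rewrite ltr0_norm //; lra.
  + by lra.
- rewrite pmulr_rle0 ?invr_gt0 // subr_le0; apply: nf => //.
  + by lra.
  + by move: h2; rewrite gtr0_norm //; lra.
Unshelve. all: end_near.
Qed.

Lemma derive1_eq0_right (R : realType) (f : R -> R) c x : c < x ->
  (forall y, c <= y -> f y = 0) -> derive1 f x = 0.
Proof.
move=> cx hf.
rewrite derive1E (@near_eq_derive _ _ _ f (cst 0)) ?derive_cst //.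
near=> y; apply: hf; apply: ltW; near: y; exact: lt_nbhsr.
Unshelve. all: end_near.
Qed.

Lemma derive1_addid (R : realType) (f : R -> R) x : derivable f x 1 ->
  derive1 (fun y => f y + y) x = derive1 f x + 1.
Proof.
move=> df; rewrite !derive1E.
have -> : (fun y => f y + y) = f + id by [].
by rewrite deriveD ?derive_id //; exact: derivable_id.
Qed.

Lemma derivable_addid (R : realType) (f : R -> R) x : derivable f x 1 ->
  derivable (fun y => f y + y) x 1.
Proof.
move=> df; have -> : (fun y => f y + y) = f + id by [].
by apply: derivableD => //; exact: derivable_id.
Qed.

Section Ent.
Variable R : realType.

Lemma xlnxM (a b : R) : 0 <= a -> 0 <= b ->
  a * b * ln (a * b) = a * b * ln a + a * b * ln b.
Proof.
move=> a0 b0.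
have [->|an] := eqVneq a 0; first by rewrite !mul0r addr0.
have [->|bn] := eqVneq b 0; first by rewrite !(mulr0,mul0r) addr0.
by rewrite lnM ?posrE ?lt0r ?an ?bn // mulrDr.
Qed.

Lemma eq_ent (T : finType) (f g : T -> R) : f =1 g -> ent f = ent g.
Proof. by move=> fg; rewrite /ent; congr (- _); apply: eq_bigr => t _; rewrite fg. Qed.

Lemma ent_pair (A : finType) n (F : A -> 'I_n -> R) :
  ent (fun u : A * 'I_n => F u.1 u.2) = \sum_a ent (F a).
Proof.
rewrite /ent sumrN; congr (- _).
by rewrite -(pair_bigA _ (fun a z => F a z * ln (F a z))).
Qed.

Definition mixg n1 n2 (t : R) (g1 : 'I_n1 -> R) (g2 : 'I_n2 -> R) (z : 'I_(n1 + n2)) : R :=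
  match fintype.split z with inl i => t * g1 i | inr j => (1 - t) * g2 j end.

Lemma mixg_l n1 n2 t g1 g2 (i : 'I_n1) : @mixg n1 n2 t g1 g2 (lshift n2 i) = t * g1 i.
Proof. by rewrite /mixg (unsplitK (inl i)). Qed.
Lemma mixg_r n1 n2 t g1 g2 (j : 'I_n2) : @mixg n1 n2 t g1 g2 (rshift n1 j) = (1 - t) * g2 j.
Proof. by rewrite /mixg (unsplitK (inr j)). Qed.

Lemma sum_mixg n1 n2 t g1 g2 : \sum_z @mixg n1 n2 t g1 g2 z = t * \sum_i g1 i + (1 - t) * \sum_j g2 j.
Proof.
rewrite big_split_ord /=; congr (_ + _); rewrite mulr_sumr; apply: eq_bigr => i _.
  exact: mixg_l.
exact: mixg_r.
Qed.

Lemma ent_mix n1 n2 (t : R) (g1 : 'I_n1 -> R) (g2 : 'I_n2 -> R) :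
  0 <= t <= 1 -> (forall i, 0 <= g1 i) -> (forall j, 0 <= g2 j) ->
  ent (mixg t g1 g2) = t * ent g1 + (1 - t) * ent g2
     - (\sum_i g1 i) * (t * ln t) - (\sum_j g2 j) * ((1 - t) * ln (1 - t)).
Proof.
move=> /andP[t0 t1] g10 g20.
rewrite /ent big_split_ord /=.
under eq_bigr do rewrite mixg_l xlnxM //.
under [X in _ + X]eq_bigr do rewrite mixg_r xlnxM ?subr_ge0 //.
rewrite !big_split /=.
have -> : \sum_(i < n1) t * g1 i * ln t = (\sum_i g1 i) * (t * ln t).
  by rewrite mulr_suml; apply: eq_bigr => i _; ring.
have -> : \sum_(i < n2) (1 - t) * g2 i * ln (1 - t) = (\sum_i g2 i) * ((1 - t) * ln (1 - t)).
  by rewrite mulr_suml; apply: eq_bigr => i _; ring.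
have -> : \sum_(i < n1) t * g1 i * ln (g1 i) = t * \sum_i g1 i * ln (g1 i).
  by rewrite mulr_sumr; apply: eq_bigr => i _; ring.
have -> : \sum_(i < n2) (1 - t) * g2 i * ln (g2 i) = (1 - t) * \sum_i g2 i * ln (g2 i).
  by rewrite mulr_sumr; apply: eq_bigr => i _; ring.
ring.
Qed.

Lemma ent_mixP (A : finType) n1 n2 (t : R) (G1 : A -> 'I_n1 -> R) (G2 : A -> 'I_n2 -> R) :
  0 <= t <= 1 -> (forall a i, 0 <= G1 a i) -> (forall a j, 0 <= G2 a j) ->
  ent (fun u : A * 'I_(n1 + n2) => mixg t (G1 u.1) (G2 u.1) u.2) =
    t * ent (fun u : A * 'I_n1 => G1 u.1 u.2) + (1 - t) * ent (fun u : A * 'I_n2 => G2 u.1 u.2)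
     - (\sum_a \sum_i G1 a i) * (t * ln t) - (\sum_a \sum_j G2 a j) * ((1 - t) * ln (1 - t)).
Proof.
move=> t01 G10 G20.
rewrite (ent_pair (fun a => mixg t (G1 a) (G2 a))) (ent_pair G1) (ent_pair G2).
under eq_bigr do rewrite ent_mix //.
rewrite !big_split /= !sumrN -!mulr_sumr -!mulr_suml.
by rewrite -!sumrN; ring.
Qed.

Lemma ent_kernel n (a : R) (g : 'I_n -> R) : 0 <= a -> (forall z, 0 <= g z) ->
  \sum_z g z = 1 -> ent (fun z => a * g z) = - (a * ln a) + a * ent g.
Proof.
move=> a0 g0 g1; rewrite /ent.
under eq_bigr do rewrite xlnxM //.
rewrite big_split /=.
have -> : \sum_(i < n) a * g i * ln a = a * ln a.
  by rewrite -mulr_suml -mulr_sumr g1 mulr1.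
have -> : \sum_(i < n) a * g i * ln (g i) = a * \sum_i g i * ln (g i).
  by rewrite mulr_sumr; apply: eq_bigr => z _; ring.
ring.
Qed.

Lemma le_sum_term (T : finType) (f : T -> R) i : (forall j, 0 <= f j) -> f i <= \sum_j f j.
Proof. by move=> f0; rewrite (bigD1 i) //= lerDl sumr_ge0. Qed.

Lemma ln_le_sub1 (x : R) : 0 < x -> ln x <= x - 1.
Proof.
move=> x0; have := @le_ln1Dx R (x - 1).
have -> : 1 + (x - 1) = x by ring.
apply; lra.
Qed.

Lemma gibbs_term (j u v : R) : 0 <= j -> j <= u -> j <= v ->
  j - u * v <= j * ln j - j * ln u - j * ln v.
Proof.
move=> j0 ju jv; have [->|jn] := eqVneq j 0.
  by rewrite !mul0r !subr0 sub0r oppr_le0 mulr_ge0 // (le_trans j0).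
have jp : 0 < j by rewrite lt0r jn.
have up : 0 < u by apply: lt_le_trans ju.
have vp : 0 < v by apply: lt_le_trans jv.
have h := ln_le_sub1 (divr_gt0 (mulr_gt0 up vp) jp).
rewrite ln_div ?posrE ?mulr_gt0 // lnM ?posrE // in h.
have h2 := ler_wpM2l (ltW jp) h.
have E : j * (u * v / j - 1) = u * v - j.
  by rewrite mulrBr mulr1 mulrC -!mulrA mulVf // mulr1.
rewrite E in h2.
by move: h2; rewrite !mulrBr mulrDr; lra.
Qed.

Lemma gibbs (A B : finType) (J : A -> B -> R) : (forall a b, 0 <= J a b) ->
  \sum_a \sum_b J a b = 1 ->
  0 <= ent (fun a => \sum_b J a b) + ent (fun b => \sum_a J a b) - ent (fun u : A * B => J u.1 u.2).
Proof.
move=> J0 J1.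
have E1 : ent (fun a => \sum_b J a b) = - \sum_a \sum_b J a b * ln (\sum_b0 J a b0).
  by rewrite /ent; congr (- _); apply: eq_bigr => a _; rewrite mulr_suml.
have E2 : ent (fun b => \sum_a J a b) = - \sum_a \sum_b J a b * ln (\sum_a0 J a0 b).
  rewrite /ent exchange_big /=; congr (- _); apply: eq_bigr => b _; rewrite mulr_suml.
  by [].
have E3 : ent (fun u : A * B => J u.1 u.2) = - \sum_a \sum_b J a b * ln (J a b).
  by rewrite /ent (pair_bigA _ (fun a b => J a b * ln (J a b))).
rewrite E1 E2 E3.
set K := \sum_a \sum_b (J a b * ln (J a b) - J a b * ln (\sum_b0 J a b0) - J a b * ln (\sum_a0 J a0 b)).
have -> : - \sum_a \sum_b J a b * ln (\sum_b0 J a b0) + - \sum_a \sum_b J a b * ln (\sum_a0 J a0 b)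
   - - \sum_a \sum_b J a b * ln (J a b) = K.
  apply/esym; rewrite /K; under eq_bigr do rewrite !sumrB.
  rewrite !sumrB; ring.
apply: (@le_trans _ _ (\sum_a \sum_b (J a b - (\sum_b0 J a b0) * (\sum_a0 J a0 b)))).
  rewrite (eq_bigr (fun a => \sum_b J a b - (\sum_b0 J a b0) * \sum_b (\sum_a0 J a0 b))); last first.
    by move=> a _; rewrite sumrB mulr_sumr.
  rewrite sumrB -mulr_suml J1 exchange_big J1 /= mulr1 subrr.
  by rewrite lexx.
rewrite /K.
apply: ler_sum => a _; apply: ler_sum => b _.
have := @gibbs_term (J a b) (\sum_b0 J a b0) (\sum_a0 J a0 b) (J0 a b)
  (le_sum_term b (J0 a)) (le_sum_term a (fun a0 => J0 a0 b)).
lra.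
Qed.

End Ent.

Section Info.
Variables (R : realType) (X S : finType) (p : X -> S -> R).
Hypotheses (hp0 : forall x s, 0 <= p x s) (hp1 : \sum_x \sum_s p x s = 1).

Definition mixq n1 n2 (t : R) (q1 : X -> 'I_n1 -> R) (q2 : X -> 'I_n2 -> R) :
  X -> 'I_(n1 + n2) -> R := fun x => mixg t (q1 x) (q2 x).

Lemma mixq_channel n1 n2 t (q1 : X -> 'I_n1 -> R) (q2 : X -> 'I_n2 -> R) :
  0 <= t <= 1 -> is_channel q1 -> is_channel q2 -> is_channel (mixq t q1 q2).
Proof.
move=> /andP[t0 t1] [q10 q11] [q20 q21]; split.
  move=> x z; rewrite /mixq /mixg; case: fintype.split => i.
    exact: mulr_ge0.
  by apply: mulr_ge0; rewrite ?subr_ge0.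
by move=> x; rewrite /mixq sum_mixg q11 q21 !mulr1 subrKC.
Qed.

Lemma sum_pXSZ n (q : X -> 'I_n -> R) : is_channel q ->
  \sum_(xs : X * S) \sum_z pXSZ p q (xs, z) = 1.
Proof.
move=> [q0 q1]; rewrite -hp1 -(pair_bigA _ (fun x s => \sum_z pXSZ p q ((x, s), z))) /=.
apply: eq_bigr => x _; apply: eq_bigr => s _.
by rewrite /pXSZ /= -mulr_sumr q1 mulr1.
Qed.

Lemma sum_pSZ n (q : X -> 'I_n -> R) : is_channel q ->
  \sum_(s : S) \sum_z pSZ p q (s, z) = 1.
Proof.
move=> [q0 q1]; rewrite -hp1 [RHS]exchange_big /=; apply: eq_bigr => s _.
rewrite /pSZ /= exchange_big /=.
by apply: eq_bigr => x _; rewrite -mulr_sumr q1 mulr1.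
Qed.

Lemma sum_pXZ n (q : X -> 'I_n -> R) : is_channel q ->
  \sum_(x : X) \sum_z pXZ p q (x, z) = 1.
Proof.
move=> [q0 q1]; rewrite -hp1; apply: eq_bigr => x _.
rewrite /pXZ /= exchange_big /=.
by apply: eq_bigr => s _; rewrite -mulr_sumr q1 mulr1.
Qed.

Lemma sum_pZ n (q : X -> 'I_n -> R) : is_channel q ->
  \sum_z pZ p q z = 1.
Proof.
move=> [q0 q1]; rewrite -hp1 /pZ exchange_big /=; apply: eq_bigr => x _.
rewrite exchange_big /=.
by apply: eq_bigr => s _; rewrite -mulr_sumr q1 mulr1.
Qed.

Lemma pX_ge0 x : 0 <= pX p x.
Proof. by apply: sumr_ge0 => s _. Qed.

Lemma chain n (q : X -> 'I_n -> R) : is_channel q ->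
  ent (pXSZ p q) - ent (pXS p) = ent (pXZ p q) - ent (pX p).
Proof.
move=> [q0 q1].
have A1 : ent (pXSZ p q) - ent (pXS p) = \sum_x pX p x * ent (q x).
  rewrite (ent_pair (fun (xs : X * S) z => p xs.1 xs.2 * q xs.1 z)).
  under eq_bigr do rewrite ent_kernel //.
  have -> : ent (pXS p) = - \sum_(i : X * S) p i.1 i.2 * ln (p i.1 i.2) by [].
  rewrite big_split /= sumrN opprK addrAC addNr add0r.
  rewrite -(pair_bigA _ (fun x s => p x s * ent (q x))) /=.
  by apply: eq_bigr => x _; rewrite /pX mulr_suml.
have A2 : ent (pXZ p q) - ent (pX p) = \sum_x pX p x * ent (q x).
  have -> : ent (pXZ p q) = ent (fun u : X * 'I_n => pX p u.1 * q u.1 u.2).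
    by apply: eq_ent => -[x z]; rewrite /pXZ /pX /= mulr_suml.
  rewrite (ent_pair (fun x z => pX p x * q x z)).
  under eq_bigr do rewrite ent_kernel ?pX_ge0 //.
  have -> : ent (pX p) = - \sum_x pX p x * ln (pX p x) by [].
  by rewrite big_split /= sumrN opprK addrAC addNr add0r.
by rewrite A1 A2.
Qed.

Lemma MI_chain n (q : X -> 'I_n -> R) : is_channel q ->
  MI_ZS p q = MI_XZ p q + condent_X_ZS p q - Ccst p.
Proof.
move=> hq; have := chain hq.
rewrite /MI_ZS /MI_XZ /condent_X_ZS /Ccst => h; lra.
Qed.

Lemma MI_ZS_ge0 n (q : X -> 'I_n -> R) : is_channel q -> 0 <= MI_ZS p q.
Proof.
move=> [q0 q1].
have J0 : forall s z, 0 <= pSZ p q (s, z).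
  by move=> s z; apply: sumr_ge0 => x _; exact: mulr_ge0.
have := gibbs J0 (sum_pSZ (conj q0 q1)).
rewrite /MI_ZS.
have -> : ent (fun s => \sum_z pSZ p q (s, z)) = ent (pS p).
  apply: eq_ent => s; rewrite /pSZ /pS /= exchange_big /=; apply: eq_bigr => x _.
  by rewrite -mulr_sumr q1 mulr1.
have -> : ent (fun z => \sum_s pSZ p q (s, z)) = ent (pZ p q).
  by apply: eq_ent => z; rewrite /pSZ /pZ /= exchange_big.
have -> : ent (fun u : S * 'I_n => pSZ p q (u.1, u.2)) = ent (pSZ p q).
  by apply: eq_ent => -[].
lra.
Qed.

Lemma MI_XZ_ge0 n (q : X -> 'I_n -> R) : is_channel q -> 0 <= MI_XZ p q.
Proof.
move=> [q0 q1].
have J0 : forall x z, 0 <= pXZ p q (x, z).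
  by move=> x z; apply: sumr_ge0 => s _; exact: mulr_ge0.
have := gibbs J0 (sum_pXZ (conj q0 q1)).
rewrite /MI_XZ.
have -> : ent (fun x => \sum_z pXZ p q (x, z)) = ent (pX p).
  apply: eq_ent => x; rewrite /pXZ /pX /= exchange_big /=; apply: eq_bigr => s _.
  by rewrite -mulr_sumr q1 mulr1.
have -> : ent (fun z => \sum_x pXZ p q (x, z)) = ent (pZ p q) by [].
have -> : ent (fun u : X * 'I_n => pXZ p q (u.1, u.2)) = ent (pXZ p q).
  by apply: eq_ent => -[].
lra.
Qed.

Lemma ent_ord1 (A : finType) (F : A -> 'I_1 -> R) :
  ent (fun u : A * 'I_1 => F u.1 u.2) = ent (fun a => F a ord0).
Proof. by rewrite ent_pair /ent sumrN; congr (- _); apply: eq_bigr => a _; rewrite big_ord1. Qed.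

Definition qc : X -> 'I_1 -> R := fun _ _ => 1.

Lemma qc_channel : is_channel qc.
Proof. by split => [//|x]; rewrite big_ord1. Qed.

Lemma MI_XZ_qc : MI_XZ p qc = 0.
Proof.
rewrite /MI_XZ.
have -> : ent (pZ p qc) = 0.
  rewrite /ent big_ord1 /pZ /qc.
  under eq_bigr do under eq_bigr do rewrite mulr1.
  by rewrite hp1 ln1 mulr0 oppr0.
have -> : ent (pXZ p qc) = ent (fun u : X * 'I_1 => pXZ p qc (u.1, u.2)) by apply: eq_ent => -[].
rewrite (ent_ord1 (fun x z => pXZ p qc (x, z))).
have -> : ent (fun a => pXZ p qc (a, ord0)) = ent (pX p).
  by apply: eq_ent => x; rewrite /pXZ /pX /qc /=; apply: eq_bigr => s _; rewrite mulr1.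
by rewrite addr0 subrr.
Qed.

Lemma condent_qc : condent_X_ZS p qc = Ccst p.
Proof.
rewrite /condent_X_ZS /Ccst.
have -> : ent (pXSZ p qc) = ent (fun u : (X * S) * 'I_1 => pXSZ p qc (u.1, u.2)) by apply: eq_ent => -[].
have -> : ent (pSZ p qc) = ent (fun u : S * 'I_1 => pSZ p qc (u.1, u.2)) by apply: eq_ent => -[].
rewrite (ent_ord1 (fun xs z => pXSZ p qc (xs, z))) (ent_ord1 (fun s z => pSZ p qc (s, z))).
congr (_ - _); apply: eq_ent.
  by move=> xs; rewrite /pXSZ /qc /pXS /= mulr1.
by move=> s; rewrite /pSZ /qc /pS /=; apply: eq_bigr => x _; rewrite mulr1.
Qed.

Definition qi : X -> 'I_#|X| -> R := fun x z => (z == enum_rank x)%:R.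

Lemma qi_channel : is_channel qi.
Proof.
split => [x z|x]; first by rewrite /qi ler0n.
rewrite /qi (bigD1 (enum_rank x)) //= eqxx big1 ?addr0 // => z /negbTE -> //.
Qed.

Lemma sum_enum (F : X -> R) : \sum_x F x = \sum_(i < #|X|) F (enum_val i).
Proof.
rewrite (reindex (@enum_val X X)) //=; exists enum_rank => i _.
  exact: enum_valK.
exact: enum_rankK.
Qed.

Lemma condent_qi : condent_X_ZS p qi = 0.
Proof.
rewrite /condent_X_ZS; apply/eqP; rewrite subr_eq0; apply/eqP.
have -> : ent (pXSZ p qi) = ent (pXS p).
  rewrite (ent_pair (fun (xs : X * S) z => p xs.1 xs.2 * qi xs.1 z)).
  have [qi0 qi1] := qi_channel.
  rewrite (eq_bigr (fun a : X * S => - (p a.1 a.2 * ln (p a.1 a.2)) + p a.1 a.2 * ent (qi a.1))); last first.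
    by move=> a _; rewrite ent_kernel.
  have E : forall x, ent (qi x) = 0.
    move=> x; rewrite /ent big1 ?oppr0 // => z _; rewrite /qi.
    by case: (z == enum_rank x); rewrite ?ln1 ?mulr0 ?mul0r.
  under eq_bigr do rewrite E mulr0 addr0.
  by rewrite sumrN.
have -> : ent (pSZ p qi) = ent (fun u : S * 'I_#|X| => p (enum_val u.2) u.1).
  apply: eq_ent => -[s z]; rewrite /pSZ /qi /=.
  rewrite (bigD1 (enum_val z)) //= enum_valK eqxx mulr1 big1 ?addr0 // => x xz.
  case: eqP => [zx|]; last by rewrite mulr0.
  by move: xz; rewrite zx enum_rankK eqxx.
rewrite (ent_pair (fun s z => p (enum_val z) s)) /ent sumrN; congr (- _).
rewrite -(pair_bigA _ (fun x s => p x s * ln (p x s))) /= exchange_big /=.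
apply: eq_bigr => s _.
by rewrite (sum_enum (fun x => p x s * ln (p x s))).
Qed.

Section Mix.
Variables (n1 n2 : nat) (t : R) (q1 : X -> 'I_n1 -> R) (q2 : X -> 'I_n2 -> R).
Hypotheses (t01 : 0 <= t <= 1) (hq1 : is_channel q1) (hq2 : is_channel q2).

Let q := mixq t q1 q2.

Lemma ent_pXSZ_mix : ent (pXSZ p q) = t * ent (pXSZ p q1) + (1 - t) * ent (pXSZ p q2)
   - t * ln t - (1 - t) * ln (1 - t).
Proof.
have -> : ent (pXSZ p q) = ent (fun u : (X * S) * 'I_(n1 + n2) =>
   mixg t (fun z => pXSZ p q1 (u.1, z)) (fun z => pXSZ p q2 (u.1, z)) u.2).
  apply: eq_ent => -[xs z]; rewrite /q /pXSZ /mixq /mixg /=.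
  by case: fintype.split => i; rewrite mulrCA.
rewrite (ent_mixP (G1 := fun a z => pXSZ p q1 (a, z)) (G2 := fun a z => pXSZ p q2 (a, z))) //; last first.
- by move=> a j; apply: mulr_ge0 => //; case: hq2.
- by move=> a j; apply: mulr_ge0 => //; case: hq1.
rewrite sum_pXSZ // sum_pXSZ // !mul1r.
have E : forall n (r : X -> 'I_n -> R), ent (fun u : (X * S) * 'I_n => pXSZ p r (u.1, u.2)) = ent (pXSZ p r).
  by move=> n r; apply: eq_ent => -[].
by rewrite !E.
Qed.

Lemma ent_pSZ_mix : ent (pSZ p q) = t * ent (pSZ p q1) + (1 - t) * ent (pSZ p q2)
   - t * ln t - (1 - t) * ln (1 - t).
Proof.
have -> : ent (pSZ p q) = ent (fun u : S * 'I_(n1 + n2) =>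
   mixg t (fun z => pSZ p q1 (u.1, z)) (fun z => pSZ p q2 (u.1, z)) u.2).
  apply: eq_ent => -[s z]; rewrite /q /pSZ /mixq /mixg /=.
  by case: fintype.split => i; rewrite mulr_sumr; apply: eq_bigr => x _; rewrite mulrCA.
rewrite (ent_mixP (G1 := fun a z => pSZ p q1 (a, z)) (G2 := fun a z => pSZ p q2 (a, z))) //; last first.
- by move=> a j; apply: sumr_ge0 => x _; apply: mulr_ge0 => //; case: hq2.
- by move=> a j; apply: sumr_ge0 => x _; apply: mulr_ge0 => //; case: hq1.
rewrite sum_pSZ // sum_pSZ // !mul1r.
have E : forall n (r : X -> 'I_n -> R), ent (fun u : S * 'I_n => pSZ p r (u.1, u.2)) = ent (pSZ p r).
  by move=> n r; apply: eq_ent => -[].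
by rewrite !E.
Qed.

Lemma ent_pXZ_mix : ent (pXZ p q) = t * ent (pXZ p q1) + (1 - t) * ent (pXZ p q2)
   - t * ln t - (1 - t) * ln (1 - t).
Proof.
have -> : ent (pXZ p q) = ent (fun u : X * 'I_(n1 + n2) =>
   mixg t (fun z => pXZ p q1 (u.1, z)) (fun z => pXZ p q2 (u.1, z)) u.2).
  apply: eq_ent => -[x z]; rewrite /q /pXZ /mixq /mixg /=.
  by case: fintype.split => i; rewrite mulr_sumr; apply: eq_bigr => s _; rewrite mulrCA.
rewrite (ent_mixP (G1 := fun a z => pXZ p q1 (a, z)) (G2 := fun a z => pXZ p q2 (a, z))) //; last first.
- by move=> a j; apply: sumr_ge0 => s _; apply: mulr_ge0 => //; case: hq2.
- by move=> a j; apply: sumr_ge0 => s _; apply: mulr_ge0 => //; case: hq1.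
rewrite sum_pXZ // sum_pXZ // !mul1r.
have E : forall n (r : X -> 'I_n -> R), ent (fun u : X * 'I_n => pXZ p r (u.1, u.2)) = ent (pXZ p r).
  by move=> n r; apply: eq_ent => -[].
by rewrite !E.
Qed.

Lemma ent_pZ_mix : ent (pZ p q) = t * ent (pZ p q1) + (1 - t) * ent (pZ p q2)
   - t * ln t - (1 - t) * ln (1 - t).
Proof.
have -> : ent (pZ p q) = ent (mixg t (pZ p q1) (pZ p q2)).
  apply: eq_ent => z; rewrite /q /pZ /mixq /mixg /=.
  case: fintype.split => i; rewrite mulr_sumr; apply: eq_bigr => x _;
  by rewrite mulr_sumr; apply: eq_bigr => s _; rewrite mulrCA.
rewrite ent_mix //; last first.
- by move=> j; do 2 (apply: sumr_ge0 => ? _); apply: mulr_ge0 => //; case: hq2.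
- by move=> j; do 2 (apply: sumr_ge0 => ? _); apply: mulr_ge0 => //; case: hq1.
by rewrite sum_pZ // sum_pZ // !mul1r.
Qed.

Lemma condent_mix : condent_X_ZS p q = t * condent_X_ZS p q1 + (1 - t) * condent_X_ZS p q2.
Proof. rewrite /condent_X_ZS ent_pXSZ_mix ent_pSZ_mix; ring. Qed.

Lemma MI_ZS_mix : MI_ZS p q = t * MI_ZS p q1 + (1 - t) * MI_ZS p q2.
Proof. rewrite /MI_ZS ent_pZ_mix ent_pSZ_mix; ring. Qed.

Lemma MI_XZ_mix : MI_XZ p q = t * MI_XZ p q1 + (1 - t) * MI_XZ p q2.
Proof. rewrite /MI_XZ ent_pZ_mix ent_pXZ_mix; ring. Qed.

End Mix.

Let FZ D := feas_vals p (@MI_ZS R X S p) D.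
Let FR D := feas_vals p (@MI_XZ R X S p) D.

Lemma lbZ D : has_lbound (FZ D).
Proof. by exists 0 => v [n [q [hq [_ ->]]]]; exact: MI_ZS_ge0. Qed.
Lemma lbR D : has_lbound (FR D).
Proof. by exists 0 => v [n [q [hq [_ ->]]]]; exact: MI_XZ_ge0. Qed.

Lemma ID_le D n (q : X -> 'I_n -> R) : is_channel q -> condent_X_ZS p q <= D ->
  IDfun p D <= MI_ZS p q.
Proof. by move=> hq hd; apply: (ge_inf (lbZ D)); exists n, q. Qed.
Lemma RD_le D n (q : X -> 'I_n -> R) : is_channel q -> condent_X_ZS p q <= D ->
  RDfun p D <= MI_XZ p q.
Proof. by move=> hq hd; apply: (ge_inf (lbR D)); exists n, q. Qed.

Lemma neZ D : 0 <= D -> nonempty (FZ D).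
Proof. by move=> D0; exists (MI_ZS p qi), #|X|, qi; rewrite condent_qi; split => //; exact: qi_channel. Qed.
Lemma neR D : 0 <= D -> nonempty (FR D).
Proof. by move=> D0; exists (MI_XZ p qi), #|X|, qi; rewrite condent_qi; split => //; exact: qi_channel. Qed.

Lemma ID_approx D e : 0 <= D -> 0 < e -> exists n (q : X -> 'I_n -> R),
  [/\ is_channel q, condent_X_ZS p q <= D & MI_ZS p q < IDfun p D + e].
Proof.
move=> D0 e0; have [v [n [q [hq [hd ->]]]] hv] := inf_adherent e0 (conj (neZ D0) (lbZ D)).
by exists n, q.
Qed.
Lemma RD_approx D e : 0 <= D -> 0 < e -> exists n (q : X -> 'I_n -> R),
  [/\ is_channel q, condent_X_ZS p q <= D & MI_XZ p q < RDfun p D + e].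
Proof.
move=> D0 e0; have [v [n [q [hq [hd ->]]]] hv] := inf_adherent e0 (conj (neR D0) (lbR D)).
by exists n, q.
Qed.

Lemma ID_mono D1 D2 : 0 <= D1 -> D1 <= D2 -> IDfun p D2 <= IDfun p D1.
Proof.
move=> D10 D12; apply: lb_le_inf; first exact: neZ.
move=> v [n [q [hq [hd ->]]]]; apply: ID_le => //; exact: le_trans D12.
Qed.

Lemma ID_convex D1 D2 t : 0 <= D1 -> 0 <= D2 -> 0 <= t -> t <= 1 ->
  IDfun p (t * D1 + (1 - t) * D2) <= t * IDfun p D1 + (1 - t) * IDfun p D2.
Proof.
move=> D10 D20 t0 t1; apply/ler_addgt0Pr => e e0.
have [n1 [q1 [hq1 hd1 hv1]]] := ID_approx D10 e0.
have [n2 [q2 [hq2 hd2 hv2]]] := ID_approx D20 e0.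
have t01 : 0 <= t <= 1 by rewrite t0 t1.
apply: (le_trans (ID_le (mixq_channel t01 hq1 hq2) _)).
  rewrite condent_mix //.
  by apply: lerD; apply: ler_wpM2l => //; rewrite subr_ge0.
rewrite MI_ZS_mix //.
have h1 : t * MI_ZS p q1 <= t * (IDfun p D1 + e) by apply: ler_wpM2l => //; exact: ltW.
have h2 : (1 - t) * MI_ZS p q2 <= (1 - t) * (IDfun p D2 + e).
  by apply: ler_wpM2l; rewrite ?subr_ge0 //; exact: ltW.
lra.
Qed.

Lemma ID_zero D : Ccst p <= D -> IDfun p D = 0.
Proof.
move=> CD; apply/eqP; rewrite eq_le; apply/andP; split.
  have := ID_le qc_channel (D := D); rewrite condent_qc => /(_ CD).
  by rewrite MI_chain ?MI_XZ_qc ?condent_qc ?add0r ?subrr //; exact: qc_channel.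
apply: lb_le_inf.
  by exists (MI_ZS p qc), 1%N, qc; rewrite condent_qc; split => //; exact: qc_channel.
by move=> v [n [q [hq [hd ->]]]]; exact: MI_ZS_ge0.
Qed.

Lemma RD_zero D : Ccst p <= D -> RDfun p D = 0.
Proof.
move=> CD; apply/eqP; rewrite eq_le; apply/andP; split.
  have := RD_le qc_channel (D := D); rewrite condent_qc => /(_ CD).
  by rewrite MI_XZ_qc.
apply: lb_le_inf.
  by exists (MI_XZ p qc), 1%N, qc; rewrite condent_qc; split => //; exact: qc_channel.
by move=> v [n [q [hq [hd ->]]]]; exact: MI_XZ_ge0.
Qed.

Lemma ID_RD D : 0 <= D -> D <= Ccst p -> IDfun p D = RDfun p D + D - Ccst p.
Proof.
move=> D0 DC; apply/eqP; rewrite eq_le; apply/andP; split.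
  apply/ler_addgt0Pr => e e0.
  have [n [q [hq hd hv]]] := RD_approx D0 e0.
  apply: (le_trans (ID_le hq hd)); rewrite MI_chain //; lra.
apply: lb_le_inf; first exact: neZ.
move=> v [n [q [hq [hd ->]]]].
have hZ := MI_ZS_ge0 hq.
have hc := MI_chain hq.
set d := condent_X_ZS p q in hd hc *.
have [dC|dC] := eqVneq d (Ccst p).
  have := RD_le hq hd; lra.
have dlt : d < Ccst p by rewrite lt_neqAle dC /= (le_trans hd DC).
have Cd0 : 0 < Ccst p - d by rewrite subr_gt0.
set t := (Ccst p - D) / (Ccst p - d).
have tE : t * (Ccst p - d) = Ccst p - D by rewrite /t -mulrA mulVf ?mulr1 // gt_eqF.
have t0 : 0 <= t by rewrite /t divr_ge0 // ?subr_ge0 // ltW.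
have t1 : t <= 1 by rewrite /t ler_pdivrMr // mul1r; lra.
have t01 : 0 <= t <= 1 by rewrite t0 t1.
have hq' := mixq_channel t01 hq qc_channel.
have hd' : condent_X_ZS p (mixq t q qc) <= D.
  rewrite condent_mix //; last exact: qc_channel.
  rewrite condent_qc -/d; nra.
have := RD_le hq' hd'; rewrite MI_XZ_mix //; last exact: qc_channel.
rewrite MI_XZ_qc => hR.
nra.
Qed.

End Info.

Unset Implicit Arguments.

Theorem theorem2p1 (R : realType) (X : finType) (ds : nat)
    (p : X -> ds.-tuple bool -> R)
    (hp0 : forall x s, 0 <= p x s)
    (hp1 : \sum_(x : X) \sum_(s : ds.-tuple bool) p x s = 1) :
  (forall D : R, 0 < D -> derivable (RDfun p) D 1 ->
     (derive1 (RDfun p) D <= -1 -> IDfun p D = RDfun p D + D - Ccst p) /\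
     (-1 < derive1 (RDfun p) D -> IDfun p D = 0)) /\
  (forall D1 D2 : R, 0 <= D1 -> D1 <= D2 -> IDfun p D2 <= IDfun p D1) /\
  (forall D1 D2 t : R, 0 <= D1 -> 0 <= D2 -> 0 <= t -> t <= 1 ->
     IDfun p (t * D1 + (1 - t) * D2) <= t * IDfun p D1 + (1 - t) * IDfun p D2).
Proof.
split; last split.
- move=> D D0 dR.
  have [DC|CD] := leP D (Ccst p).
  + split => [_|hlt]; first by move: (ID_RD hp0 hp1 (ltW D0) DC).
    have [DeC|DnC] := eqVneq D (Ccst p).
      by move: (ID_zero hp0 hp1 (D := D)); rewrite DeC lexx => ->.
    have DltC : D < Ccst p by rewrite lt_neqAle DnC DC.
    have hd := @nincr_derive1_le0 R (fun y => RDfun p y + y) 0 (Ccst p) D D0 DltC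
      (derivable_addid dR).
    rewrite derive1_addid // in hd.
    have : derive1 (RDfun p) D + 1 <= 0.
      apply: hd => u v u0 uv vC.
      have e1 := ID_RD hp0 hp1 (ltW u0) (ltW (le_lt_trans uv vC)).
      have e2 := ID_RD hp0 hp1 (le_trans (ltW u0) uv) (ltW vC).
      have := ID_mono hp0 hp1 (ltW u0) uv.
      lra.
    lra.
  + split => [hle|_]; last by move: (ID_zero hp0 hp1 (ltW CD)).
    have := @derive1_eq0_right R (RDfun p) (Ccst p) D CD (RD_zero hp0 hp1).
    lra.
- by move=> D1 D2 D10 D12; move: (ID_mono hp0 hp1 D10 D12).
- by move=> D1 D2 t D10 D20 t0 t1; move: (ID_convex hp0 hp1 D10 D20 t0 t1).
Qed.
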